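(* Let $\epsilon=\exp\!\left(-\frac{1}{\sigma^2}(\|u_T\|_\infty+\|f\|_\infty T)\right)$ and define $\widehat\psi^0=0\in\mathcal{M}$, $\widehat\phi^{n+\frac12}=\widehat\Phi(\widehat\psi^n)$, $\widehat\psi^{n+1}=\widehat\Psi(\widehat\phi^{n+\frac12})$ for $n\in\mathbb{N}$. Then: (i) $(\widehat\phi^{n+\frac12})_n$ is an entrywise nonincreasing sequence in $\mathcal{M}_\epsilon$; (ii) $(\widehat\psi^n)_n$ is an entrywise nondecreasing sequence in $\mathcal{M}_0$, bounded from above by $\frac{\|m_0\|_\infty}{\epsilon}$; (iii) $(\widehat\phi^{n+\frac12},\widehat\psi^n)_n$ converges to a couple $(\widehat\phi,\widehat\psi)\in\mathcal{M}_\epsilon\times\mathcal{M}_0$ satisfying, for $0\le i\le I-1$, $0\le j\le J$, $\frac{\widehat\phi_{i+1,j}-\widehat\phi_{i,j}}{\Delta t}+\frac{\sigma^2}{2}\frac{\widehat\phi_{i,j+1}-2\widehat\phi_{i,j}+\widehat\phi_{i,j-1}}{(\Delta x)^2}=-\frac{1}{\sigma^2}f(x_j,\widehat\phi_{i,j}\widehat\psi_{i,j})\widehat\phi_{i,j}$, $\widehat\phi_{I,j}=\exp(u_T(x_j)/\sigma^2)$, $\frac{\widehat\psi_{i+1,j}-\widehat\psi_{i,j}}{\Delta t}-\frac{\sigma^2}{2}\frac{\widehat\psi_{i+1,j+1}-2\widehat\psi_{i+1,j}+\widehat\psi_{i+1,j-1}}{(\Delta x)^2}=\frac{1}{\sigma^2}f(x_j,\widehat\phi_{i+1,j}\widehat\psi_{i+1,j})\widehat\psi_{i+1,j}$,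 $\widehat\psi_{0,j}=m_0(x_j)/\widehat\phi_{0,j}$, with the Neumann conventions for indices $-1$ and $J+1$.
   Context: Discrete setting: $\Omega=(0,1)$, $T>0$, $\sigma>0$; $u_T:[0,1]\to\mathbb{R}$ bounded, $m_0:[0,1]\to\mathbb{R}$ bounded with $m_0\ge0$. $f:[0,1]\times\mathbb{R}\to\mathbb{R}$ is continuous and nonincreasing in its second variable, bounded with $\|f\|_\infty=\sup|f|$, and $f\le0$. For positive integers $I,J$: $\Delta t=T/I$, $\Delta x=1/J$, $x_j=j\Delta x$. $\mathcal{M}$ is the set of real matrices $(m_{i,j})_{0\le i\le I,0\le j\le J}$, $\mathcal{M}_\epsilon=\{m\in\mathcal{M}: m_{i,j}\ge\epsilon\ \forall i,j\}$. Conventions: $a_{i,-1}=a_{i,0}$, $a_{i,J+1}=a_{i,J}$ for any matrix $a$. $\widehat\Phi:\mathcal{M}_0\to\mathcal{M}$ maps $\widehat\psi$ to the unique $\widehat\phi$ solving the $\phi$-equations in (iii) (with $\widehat\psi$ given) and $\widehat\phi_{I,j}=\exp(u_T(x_j)/\sigma^2)$; $\widehat\Psi:\mathcal{M}_\epsilon\to\mathcal{M}$ maps $\widehat\phi$ to the unique $\widehat\psi$ solving the $\psi$-equations in (iii) (with $\widehat\phi$ given) and $\widehat\psi_{0,j}=m_0(x_j)/\widehat\phi_{0,j}$. These maps are well defined, $\widehat\Phi(\mathcal{M}_0)\subset\mathcal{M}_\epsilon$ and $\widehat\Psi(\mathcal{M}_\epsilon)\subset\mathcal{M}_0$. *)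

(* Defs.v *)
From Stdlib Require Import Reals Lra.
Open Scope R_scope.

(* A "matrix" (m_{i,j})_{0<=i<=I, 0<=j<=J}: only entries with i<=I, j<=J matter. *)
Definition mat := nat -> nat -> R.

Definition is_sup_norm (g : R -> R) (N : R) : Prop :=
  is_lub (fun y => exists x, 0 <= x <= 1 /\ y = Rabs (g x)) N.

Definition is_sup_norm2 (f : R -> R -> R) (N : R) : Prop :=
  is_lub (fun y => exists x z, 0 <= x <= 1 /\ y = Rabs (f x z)) N.

Definition continuous2_on (f : R -> R -> R) : Prop :=
  forall x z, 0 <= x <= 1 -> forall e, 0 < e -> exists d, 0 < d /\
    forall x' z', 0 <= x' <= 1 -> Rabs (x' - x) < d -> Rabs (z' - z) < d ->
      Rabs (f x' z' - f x z) < e.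

Definition in_M (I J : nat) (eps : R) (m : mat) : Prop :=
  forall i j, (i <= I)%nat -> (j <= J)%nat -> eps <= m i j.

(* Neumann conventions: a_{i,-1} = a_{i,0}, a_{i,J+1} = a_{i,J} *)
Definition nbrL (a : mat) (i j : nat) : R := a i (Nat.pred j).
Definition nbrR (J : nat) (a : mat) (i j : nat) : R := a i (Nat.min (S j) J).

Definition dt (T : R) (I : nat) : R := T / INR I.
Definition dx (J : nat) : R := 1 / INR J.
Definition xg (J : nat) (j : nat) : R := INR j * dx J.

Definition phi_system (T sigma : R) (I J : nat) (uT : R -> R) (f : R -> R -> R)
    (psi phi : mat) : Prop :=
  (forall i j, (i < I)%nat -> (j <= J)%nat ->
     (phi (S i) j - phi i j) / dt T I
     + sigma ^ 2 / 2 * (nbrR J phi i j - 2 * phi i j + nbrL phi i j) / (dx J) ^ 2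
     = - (1 / sigma ^ 2) * f (xg J j) (phi i j * psi i j) * phi i j)
  /\ (forall j, (j <= J)%nat -> phi I j = exp (uT (xg J j) / sigma ^ 2)).

Definition psi_system (T sigma : R) (I J : nat) (m0 : R -> R) (f : R -> R -> R)
    (phi psi : mat) : Prop :=
  (forall i j, (i < I)%nat -> (j <= J)%nat ->
     (psi (S i) j - psi i j) / dt T I
     - sigma ^ 2 / 2 * (nbrR J psi (S i) j - 2 * psi (S i) j + nbrL psi (S i) j) / (dx J) ^ 2
     = (1 / sigma ^ 2) * f (xg J j) (phi (S i) j * psi (S i) j) * psi (S i) j)
  /\ (forall j, (j <= J)%nat -> psi O j = m0 (xg J j) / phi O j).

(* Main.v *)
Require Import Defs.
From Stdlib Require Import Reals Lra Lia.
Open Scope R_scope.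

Lemma exp_le_mono x y : x <= y -> exp x <= exp y.
Proof. intros [H|H]; [left; apply exp_increasing; auto | rewrite H; lra]. Qed.

Lemma one_plus_le_exp x : 0 <= x -> 1 + x <= exp x.
Proof.
  intros H; destruct (Req_dec x 0) as [->|H0].
  - rewrite exp_0; lra.
  - left; apply exp_ineq1; auto.
Qed.

Lemma argmax_ex (g : nat -> R) (J : nat) :
  exists m, (m <= J)%nat /\ forall k, (k <= J)%nat -> g k <= g m.
Proof.
  induction J as [|J IH].
  - exists 0%nat; split; [lia|]. intros k Hk; replace k with 0%nat by lia; lra.
  - destruct IH as [m [Hm Hmax]].
    destruct (Rle_or_lt (g (S J)) (g m)) as [h|h].
    + exists m; split; [lia|]. intros k Hk.
      destruct (Nat.eq_dec k (S J)) as [->|hk]; [auto| apply Hmax; lia].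
    + exists (S J); split; [lia|]. intros k Hk.
      destruct (Nat.eq_dec k (S J)) as [->|hk]; [lra|].
      pose proof (Hmax k ltac:(lia)); lra.
Qed.

Lemma row_cmp (J : nat) (c k : R) (X1 X2 Y1 Y2 G1 G2 : nat -> R) :
  0 <= c -> 0 <= k ->
  (forall j, (j <= J)%nat -> X1 j - c * (X1 (Nat.min (S j) J) - 2 * X1 j + X1 (Nat.pred j)) - k * G1 j <= Y1 j) ->
  (forall j, (j <= J)%nat -> Y2 j <= X2 j - c * (X2 (Nat.min (S j) J) - 2 * X2 j + X2 (Nat.pred j)) - k * G2 j) ->
  (forall j, (j <= J)%nat -> Y1 j <= Y2 j) ->
  (forall j, (j <= J)%nat -> X2 j < X1 j -> G1 j <= G2 j) ->
  forall j, (j <= J)%nat -> X1 j <= X2 j.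
Proof.
  intros Hc Hk H1 H2 HY HG.
  destruct (argmax_ex (fun j => X1 j - X2 j) J) as [m [Hm Hmax]].
  assert (Hd : X1 m - X2 m <= 0).
  { destruct (Rle_or_lt (X1 m - X2 m) 0) as [h|h]; [exact h|]. exfalso.
    pose proof (Hmax (Nat.min (S m) J) ltac:(lia)) as HR.
    pose proof (Hmax (Nat.pred m) ltac:(lia)) as HL.
    cbv beta in HR, HL.
    pose proof (H1 m Hm). pose proof (H2 m Hm). pose proof (HY m Hm).
    pose proof (HG m Hm ltac:(lra)).
    assert (0 <= c * ((X1 m - X2 m) - (X1 (Nat.min (S m) J) - X2 (Nat.min (S m) J))
                 + (X1 m - X2 m) - (X1 (Nat.pred m) - X2 (Nat.pred m))))
      by (apply Rmult_le_pos; lra).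
    assert (0 <= k * (G2 m - G1 m)) by (apply Rmult_le_pos; lra).
    lra. }
  intros j Hj. pose proof (Hmax j Hj). cbv beta in *. lra.
Qed.

Lemma phi_form (a b L F dtv s dxv : R) : 0 < dtv -> 0 < s -> 0 < dxv ->
  (a - b) / dtv + s ^ 2 / 2 * L / dxv ^ 2 = - (1 / s ^ 2) * F * b ->
  b - (dtv * s ^ 2 / 2 / dxv ^ 2) * L - (dtv / s ^ 2) * (F * b) = a.
Proof.
  intros Ht Hs Hx H.
  assert (Hs2 : 0 < s ^ 2) by (apply pow_lt; lra).
  assert (Hx2 : 0 < dxv ^ 2) by (apply pow_lt; lra).
  assert (E : (a - b) / dtv = - (1 / s ^ 2) * F * b - s ^ 2 / 2 * L / dxv ^ 2) by lra.
  assert (Ha : a = b + dtv * ((a - b) / dtv)) by (field; lra).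
  rewrite Ha, E. field. split; lra.
Qed.

Lemma psi_form (a b L F dtv s dxv : R) : 0 < dtv -> 0 < s -> 0 < dxv ->
  (a - b) / dtv - s ^ 2 / 2 * L / dxv ^ 2 = (1 / s ^ 2) * F * a ->
  a - (dtv * s ^ 2 / 2 / dxv ^ 2) * L - (dtv / s ^ 2) * (F * a) = b.
Proof.
  intros Ht Hs Hx H.
  assert (Hs2 : 0 < s ^ 2) by (apply pow_lt; lra).
  assert (Hx2 : 0 < dxv ^ 2) by (apply pow_lt; lra).
  assert (E : (a - b) / dtv = (1 / s ^ 2) * F * a + s ^ 2 / 2 * L / dxv ^ 2) by lra.
  assert (Hb : b = a - dtv * ((a - b) / dtv)) by (field; lra).
  rewrite Hb, E. field. split; lra.
Qed.

Lemma cv_const c : Un_cv (fun _ => c) c.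
Proof.
  intros e He; exists 0%nat; intros; unfold R_dist.
  replace (c - c) with 0 by ring; rewrite Rabs_R0; lra.
Qed.

Lemma cv_shift (u : nat -> R) l : Un_cv u l -> Un_cv (fun n => u (S n)) l.
Proof. intros H e He; destruct (H e He) as [N HN]; exists N; intros n Hn; apply HN; lia. Qed.

Lemma cv_ge (u : nat -> R) l c : Un_cv u l -> (forall n, c <= u n) -> c <= l.
Proof.
  intros H Hc. destruct (Rle_or_lt c l) as [h|h]; auto.
  destruct (H (c - l)) as [N HN]; [lra|].
  specialize (HN N (le_n N)). unfold R_dist in HN. specialize (Hc N).
  pose proof (Rle_abs (u N - l)). lra.
Qed.

Lemma cv_opp (u : nat -> R) l : Un_cv u l -> Un_cv (fun n => - u n) (- l).
Proof.
  intros H e He; destruct (H e He) as [N HN]; exists N; intros n Hn.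
  unfold R_dist in *. replace (- u n - - l) with (- (u n - l)) by ring.
  rewrite Rabs_Ropp. apply HN; auto.
Qed.

Lemma lim_eq (u v : nat -> R) (a b : R) :
  (forall n, u n = v n) -> Un_cv u a -> Un_cv v b -> a = b.
Proof.
  intros Huv Ha Hb. apply (UL_sequence u); auto.
  intros e He; destruct (Hb e He) as [N HN]; exists N; intros n Hn; rewrite Huv; auto.
Qed.

Theorem proposition11
  (T sigma : R) (I J : nat) (uT m0 : R -> R) (f : R -> R -> R)
  (uTn m0n fn : R)
  (HT : 0 < T) (Hsigma : 0 < sigma) (HI : (1 <= I)%nat) (HJ : (1 <= J)%nat)
  (HuT : is_sup_norm uT uTn)
  (Hm0 : is_sup_norm m0 m0n)
  (Hm0pos : forall x, 0 <= x <= 1 -> 0 <= m0 x)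
  (Hfc : continuous2_on f)
  (Hfmon : forall x z1 z2, 0 <= x <= 1 -> z1 <= z2 -> f x z2 <= f x z1)
  (Hfn : is_sup_norm2 f fn)
  (Hfneg : forall x z, 0 <= x <= 1 -> f x z <= 0)
  (phi psi : nat -> mat)
  (Hpsi0 : forall i j, (i <= I)%nat -> (j <= J)%nat -> psi O i j = 0)
  (Hphi : forall n, phi_system T sigma I J uT f (psi n) (phi n))
  (Hpsi : forall n, psi_system T sigma I J m0 f (phi n) (psi (S n))) :
  let eps := exp (- (1 / sigma ^ 2) * (uTn + fn * T)) in
  (* (i) *)
  (forall n, in_M I J eps (phi n)) /\
  (forall n i j, (i <= I)%nat -> (j <= J)%nat -> phi (S n) i j <= phi n i j) /\
  (* (ii) *)
  (forall n, in_M I J 0 (psi n)) /\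
  (forall n i j, (i <= I)%nat -> (j <= J)%nat -> psi n i j <= psi (S n) i j) /\
  (forall n i j, (i <= I)%nat -> (j <= J)%nat -> psi n i j <= m0n / eps) /\
  (* (iii) *)
  (exists phih psih : mat,
     (forall i j, (i <= I)%nat -> (j <= J)%nat ->
        Un_cv (fun n => phi n i j) (phih i j) /\ Un_cv (fun n => psi n i j) (psih i j)) /\
     in_M I J eps phih /\ in_M I J 0 psih /\
     phi_system T sigma I J uT f psih phih /\
     psi_system T sigma I J m0 f phih psih).
Proof.
  intros eps.
  assert (Hs2 : 0 < sigma ^ 2) by (apply pow_lt; lra).
  assert (HIr : 0 < INR I) by (apply lt_0_INR; lia).
  assert (HJr : 0 < INR J) by (apply lt_0_INR; lia).
  assert (Hdt : 0 < dt T I) by (unfold dt; apply Rdiv_lt_0_compat; lra).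
  assert (Hdx : 0 < dx J) by (unfold dx; apply Rdiv_lt_0_compat; lra).
  set (c := dt T I * sigma ^ 2 / 2 / dx J ^ 2).
  set (k := dt T I / sigma ^ 2).
  assert (Hc : 0 <= c).
  { unfold c. left. apply Rdiv_lt_0_compat; [|apply pow_lt; lra].
    apply Rdiv_lt_0_compat; [|lra]. apply Rmult_lt_0_compat; lra. }
  assert (Hk : 0 < k) by (unfold k; apply Rdiv_lt_0_compat; lra).
  assert (Hx : forall j, (j <= J)%nat -> 0 <= xg J j <= 1).
  { intros j Hj. unfold xg, dx. apply le_INR in Hj. pose proof (pos_INR j).
    assert (E : INR j * (1 / INR J) * INR J = INR j) by (field; lra).
    assert (0 <= 1 / INR J) by (left; apply Rdiv_lt_0_compat; lra).
    split; [apply Rmult_le_pos; lra | nra]. }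
  assert (Hfb : forall x z, 0 <= x <= 1 -> - fn <= f x z).
  { intros x z Hx0. destruct Hfn as [Hub _].
    assert (Rabs (f x z) <= fn) by (apply Hub; exists x, z; auto).
    pose proof (Rle_abs (- f x z)). rewrite Rabs_Ropp in *. lra. }
  assert (Hfn0 : 0 <= fn).
  { pose proof (Hfb 0 0 ltac:(lra)). pose proof (Hfneg 0 0 ltac:(lra)). lra. }
  assert (HuTb : forall x, 0 <= x <= 1 -> - uTn <= uT x).
  { intros x Hx0. destruct HuT as [Hub _].
    assert (Rabs (uT x) <= uTn) by (apply Hub; exists x; auto).
    pose proof (Rle_abs (- uT x)). rewrite Rabs_Ropp in *. lra. }
  assert (Hm0b : forall x, 0 <= x <= 1 -> m0 x <= m0n).
  { intros x Hx0. destruct Hm0 as [Hub _].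
    assert (Rabs (m0 x) <= m0n) by (apply Hub; exists x; auto).
    pose proof (Rle_abs (m0 x)). lra. }
  assert (Hm0n : 0 <= m0n).
  { pose proof (Hm0b 0 ltac:(lra)). pose proof (Hm0pos 0 ltac:(lra)). lra. }
  assert (Heps : 0 < eps) by (unfold eps; apply exp_pos).
  assert (HphiR : forall n i j, (i < I)%nat -> (j <= J)%nat ->
    phi n i j - c * (phi n i (Nat.min (S j) J) - 2 * phi n i j + phi n i (Nat.pred j))
    - k * (f (xg J j) (phi n i j * psi n i j) * phi n i j) = phi n (S i) j).
  { intros n i j Hi Hj. destruct (Hphi n) as [He _].
    exact (phi_form _ _ _ _ _ _ _ Hdt Hsigma Hdx (He i j Hi Hj)). }
  assert (HpsiR : forall n i j, (i < I)%nat -> (j <= J)%nat ->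
    psi (S n) (S i) j - c * (psi (S n) (S i) (Nat.min (S j) J) - 2 * psi (S n) (S i) j
       + psi (S n) (S i) (Nat.pred j))
    - k * (f (xg J j) (phi n (S i) j * psi (S n) (S i) j) * psi (S n) (S i) j) = psi (S n) i j).
  { intros n i j Hi Hj. destruct (Hpsi n) as [He _].
    exact (psi_form _ _ _ _ _ _ _ Hdt Hsigma Hdx (He i j Hi Hj)). }
  assert (Hphipos : forall n, in_M I J eps (phi n)).
  { intros n.
    assert (Hb : forall m, (m <= I)%nat -> forall j, (j <= J)%nat ->
      exp (- uTn / sigma ^ 2 - k * fn * INR m) <= phi n (I - m)%nat j).
    { induction m as [|m IH]; intros Hm j Hj.
      - replace (I - 0)%nat with I by lia. destruct (Hphi n) as [_ Ht].
        rewrite (Ht j Hj). apply exp_le_mono. simpl INR.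
        pose proof (HuTb _ (Hx j Hj)).
        assert (- uTn / sigma ^ 2 <= uT (xg J j) / sigma ^ 2).
        { unfold Rdiv. apply Rmult_le_compat_r; [left; apply Rinv_0_lt_compat; lra | lra]. }
        lra.
      - set (q := exp (- uTn / sigma ^ 2 - k * fn * INR (S m))).
        assert (Hq0 : 0 <= q) by (left; apply exp_pos).
        assert (Hqstep : q * (1 + k * fn) <= exp (- uTn / sigma ^ 2 - k * fn * INR m)).
        { unfold q. rewrite S_INR.
          replace (- uTn / sigma ^ 2 - k * fn * INR m)
            with ((- uTn / sigma ^ 2 - k * fn * (INR m + 1)) + k * fn) by ring.
          rewrite exp_plus. apply Rmult_le_compat_l; [left; apply exp_pos|].
          apply one_plus_le_exp. apply Rmult_le_pos; lra. }
        apply (row_cmp J c k (fun _ => q) (fun j => phi n (I - S m)%nat j)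
          (fun _ => q * (1 + k * fn)) (fun j => phi n (S (I - S m)) j)
          (fun _ => - fn * q)
          (fun j => f (xg J j) (phi n (I - S m)%nat j * psi n (I - S m)%nat j) * phi n (I - S m)%nat j));
          try lra; try assumption.
        + intros j0 Hj0. lra.
        + intros j0 Hj0. right. symmetry. apply HphiR; lia.
        + intros j0 Hj0. replace (S (I - S m)) with (I - m)%nat by lia.
          eapply Rle_trans; [exact Hqstep | apply IH; lia].
        + intros j0 Hj0 Hlt. cbv beta in *.
          pose proof (Hfb (xg J j0) (phi n (I - S m)%nat j0 * psi n (I - S m)%nat j0) (Hx j0 Hj0)).
          pose proof (Hfneg (xg J j0) (phi n (I - S m)%nat j0 * psi n (I - S m)%nat j0) (Hx j0 Hj0)).
          destruct (Rle_or_lt 0 (phi n (I - S m)%nat j0)); nra. }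
    intros i j Hi Hj. replace i with (I - (I - i))%nat by lia.
    eapply Rle_trans; [|apply Hb; lia]. unfold eps. apply exp_le_mono.
    assert (E : - (1 / sigma ^ 2) * (uTn + fn * T) = - uTn / sigma ^ 2 - k * fn * INR I)
      by (unfold k, dt; field; lra).
    rewrite E.
    assert (k * fn * INR (I - i) <= k * fn * INR I).
    { apply Rmult_le_compat_l; [apply Rmult_le_pos; lra | apply le_INR; lia]. }
    lra. }
  assert (Hpsipos : forall n, in_M I J 0 (psi n)).
  { intros [|n].
    - intros i j Hi Hj. rewrite Hpsi0 by auto. lra.
    - assert (H : forall i, (i <= I)%nat -> forall j, (j <= J)%nat -> 0 <= psi (S n) i j).
      { induction i as [|i IHi]; intros Hi j Hj.
        - destruct (Hpsi n) as [_ H0]. rewrite (H0 j Hj).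
          pose proof (Hphipos n 0%nat j ltac:(lia) Hj).
          unfold Rdiv. apply Rmult_le_pos; [apply Hm0pos, Hx, Hj|].
          left; apply Rinv_0_lt_compat; lra.
        - apply (row_cmp J c k (fun _ => 0) (fun j => psi (S n) (S i) j)
            (fun _ => 0) (fun j => psi (S n) i j) (fun _ => 0)
            (fun j => f (xg J j) (phi n (S i) j * psi (S n) (S i) j) * psi (S n) (S i) j));
            try lra; try assumption.
          + intros j0 Hj0. lra.
          + intros j0 Hj0. right. symmetry. apply HpsiR; lia.
          + intros j0 Hj0. apply IHi; lia.
          + intros j0 Hj0 Hlt. cbv beta in *.
            pose proof (Hfneg (xg J j0) (phi n (S i) j0 * psi (S n) (S i) j0) (Hx j0 Hj0)).
            nra. }
      intros i j Hi Hj; apply H; auto. }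
  assert (Hpsiub : forall n i j, (i <= I)%nat -> (j <= J)%nat -> psi n i j <= m0n / eps).
  { assert (HM : 0 <= m0n / eps) by (apply Rmult_le_pos; [lra | left; apply Rinv_0_lt_compat; lra]).
    intros [|n].
    - intros i j Hi Hj. rewrite Hpsi0 by auto. lra.
    - induction i as [|i IHi]; intros j Hi Hj.
      + destruct (Hpsi n) as [_ H0]. rewrite (H0 j Hj).
        pose proof (Hphipos n 0%nat j ltac:(lia) Hj).
        unfold Rdiv. apply Rmult_le_compat.
        * apply Hm0pos, Hx, Hj.
        * left; apply Rinv_0_lt_compat; lra.
        * apply Hm0b, Hx, Hj.
        * apply Rinv_le_contravar; lra.
      + apply (row_cmp J c k (fun j => psi (S n) (S i) j) (fun _ => m0n / eps)
            (fun j => psi (S n) i j) (fun _ => m0n / eps)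
            (fun j => f (xg J j) (phi n (S i) j * psi (S n) (S i) j) * psi (S n) (S i) j)
            (fun _ => 0)); try lra; try assumption.
        * intros j0 Hj0. right. apply HpsiR; lia.
        * intros j0 Hj0. lra.
        * intros j0 Hj0. apply IHi; lia.
        * intros j0 Hj0 Hlt. cbv beta in *.
          pose proof (Hfneg (xg J j0) (phi n (S i) j0 * psi (S n) (S i) j0) (Hx j0 Hj0)).
          pose proof (Hpsipos (S n) (S i) j0 Hi Hj0). nra. }
  assert (Hphimono : forall n, (forall i j, (i <= I)%nat -> (j <= J)%nat -> psi n i j <= psi (S n) i j) ->
     forall i j, (i <= I)%nat -> (j <= J)%nat -> phi (S n) i j <= phi n i j).
  { intros n Hmon.
    assert (Hb : forall m, (m <= I)%nat -> forall j, (j <= J)%nat ->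
      phi (S n) (I - m)%nat j <= phi n (I - m)%nat j).
    { induction m as [|m IH]; intros Hm j Hj.
      - replace (I - 0)%nat with I by lia.
        destruct (Hphi n) as [_ Ta]. destruct (Hphi (S n)) as [_ Tb].
        rewrite (Ta j Hj), (Tb j Hj). lra.
      - apply (row_cmp J c k (fun j => phi (S n) (I - S m)%nat j) (fun j => phi n (I - S m)%nat j)
          (fun j => phi (S n) (S (I - S m)) j) (fun j => phi n (S (I - S m)) j)
          (fun j => f (xg J j) (phi (S n) (I - S m)%nat j * psi (S n) (I - S m)%nat j) * phi (S n) (I - S m)%nat j)
          (fun j => f (xg J j) (phi n (I - S m)%nat j * psi n (I - S m)%nat j) * phi n (I - S m)%nat j));
          try lra; try assumption.
        + intros j0 Hj0. right. apply HphiR; lia.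
        + intros j0 Hj0. right. symmetry. apply HphiR; lia.
        + intros j0 Hj0. replace (S (I - S m)) with (I - m)%nat by lia. apply IH; lia.
        + intros j0 Hj0 Hlt. cbv beta in *.
          set (a1 := phi (S n) (I - S m)%nat j0) in *.
          set (a2 := phi n (I - S m)%nat j0) in *.
          set (p1 := psi (S n) (I - S m)%nat j0) in *.
          set (p2 := psi n (I - S m)%nat j0) in *.
          assert (Ha2 : eps <= a2) by (apply Hphipos; lia).
          assert (Hp2 : 0 <= p2) by (apply Hpsipos; lia).
          assert (Hp12 : p2 <= p1) by (apply Hmon; lia).
          assert (Hz : a2 * p2 <= a1 * p1) by nra.
          pose proof (Hfmon (xg J j0) _ _ (Hx j0 Hj0) Hz).
          pose proof (Hfneg (xg J j0) (a2 * p2) (Hx j0 Hj0)).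
          nra. }
    intros i j Hi Hj. replace i with (I - (I - i))%nat by lia. apply Hb; lia. }
  assert (Hpsimono : forall n i j, (i <= I)%nat -> (j <= J)%nat -> psi n i j <= psi (S n) i j).
  { induction n as [|n IHn].
    - intros i j Hi Hj. rewrite Hpsi0 by auto. apply (Hpsipos 1%nat); auto.
    - pose proof (Hphimono n IHn) as Hpm.
      assert (H : forall i, (i <= I)%nat -> forall j, (j <= J)%nat -> psi (S n) i j <= psi (S (S n)) i j).
      { induction i as [|i IHi]; intros Hi j Hj.
        - destruct (Hpsi n) as [_ A]. destruct (Hpsi (S n)) as [_ B].
          rewrite (A j Hj), (B j Hj).
          pose proof (Hphipos (S n) 0%nat j ltac:(lia) Hj).
          unfold Rdiv. apply Rmult_le_compat_l; [apply Hm0pos, Hx, Hj|].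
          apply Rinv_le_contravar; [lra | apply Hpm; lia].
        - apply (row_cmp J c k (fun j => psi (S n) (S i) j) (fun j => psi (S (S n)) (S i) j)
            (fun j => psi (S n) i j) (fun j => psi (S (S n)) i j)
            (fun j => f (xg J j) (phi n (S i) j * psi (S n) (S i) j) * psi (S n) (S i) j)
            (fun j => f (xg J j) (phi (S n) (S i) j * psi (S (S n)) (S i) j) * psi (S (S n)) (S i) j));
            try lra; try assumption.
          + intros j0 Hj0. right. apply HpsiR; lia.
          + intros j0 Hj0. right. symmetry. apply HpsiR; lia.
          + intros j0 Hj0. apply IHi; lia.
          + intros j0 Hj0 Hlt. cbv beta in *.
            set (a1 := phi n (S i) j0) in *.
            set (a2 := phi (S n) (S i) j0) in *.
            set (p1 := psi (S n) (S i) j0) in *.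
            set (p2 := psi (S (S n)) (S i) j0) in *.
            assert (Ha2 : eps <= a2) by (apply Hphipos; lia).
            assert (Hp2 : 0 <= p2) by (apply Hpsipos; lia).
            assert (Ha12 : a2 <= a1) by (apply Hpm; lia).
            assert (Hz : a2 * p2 <= a1 * p1) by nra.
            pose proof (Hfmon (xg J j0) _ _ (Hx j0 Hj0) Hz).
            pose proof (Hfneg (xg J j0) (a2 * p2) (Hx j0 Hj0)).
            nra. }
      intros i j Hi Hj; apply H; auto. }
  split; [exact Hphipos|].
  split; [intros n; apply Hphimono; intros; apply Hpsimono; auto|].
  split; [exact Hpsipos|].
  split; [exact Hpsimono|].
  split; [exact Hpsiub|].
  assert (Hdec : forall i j, Un_decreasing (fun n => phi n (Nat.min i I) (Nat.min j J))).
  { intros i j n. apply Hphimono; [intros; apply Hpsimono; auto | lia | lia]. }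
  assert (Hlb : forall i j, has_lb (fun n => phi n (Nat.min i I) (Nat.min j J))).
  { intros i j. exists (- eps). intros x [n ->]. unfold opp_seq.
    pose proof (Hphipos n (Nat.min i I) (Nat.min j J) ltac:(lia) ltac:(lia)). lra. }
  assert (Hgr : forall i j, Un_growing (fun n => psi n (Nat.min i I) (Nat.min j J))).
  { intros i j n. apply Hpsimono; lia. }
  assert (Hub : forall i j, has_ub (fun n => psi n (Nat.min i I) (Nat.min j J))).
  { intros i j. exists (m0n / eps). intros x [n ->]. apply Hpsiub; lia. }
  assert (Hex : exists phih psih : mat,
     forall i j, (i <= I)%nat -> (j <= J)%nat ->
        Un_cv (fun n => phi n i j) (phih i j) /\ Un_cv (fun n => psi n i j) (psih i j)).
  { exists (fun i j => proj1_sig (decreasing_cv _ (Hdec i j) (Hlb i j))),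
           (fun i j => proj1_sig (growing_cv _ (Hgr i j) (Hub i j))).
    intros i j Hi Hj. cbv beta. split.
    - destruct (decreasing_cv _ (Hdec i j) (Hlb i j)) as [l Hl]. simpl.
      rewrite Nat.min_l in Hl by lia. rewrite Nat.min_l in Hl by lia. exact Hl.
    - destruct (growing_cv _ (Hgr i j) (Hub i j)) as [l Hl]. simpl.
      rewrite Nat.min_l in Hl by lia. rewrite Nat.min_l in Hl by lia. exact Hl. }
  destruct Hex as [phih [psih Hcv]].
  assert (Hcvphi : forall i j, (i <= I)%nat -> (j <= J)%nat -> Un_cv (fun n => phi n i j) (phih i j))
    by (intros; apply Hcv; auto).
  assert (Hcvpsi : forall i j, (i <= I)%nat -> (j <= J)%nat -> Un_cv (fun n => psi n i j) (psih i j))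
    by (intros; apply Hcv; auto).
  assert (HcvpsiS : forall i j, (i <= I)%nat -> (j <= J)%nat -> Un_cv (fun n => psi (S n) i j) (psih i j))
    by (intros; apply (cv_shift (fun n => psi n i j)); apply Hcv; auto).
  assert (Hcvf : forall x (u : nat -> R) l, 0 <= x <= 1 -> Un_cv u l ->
            Un_cv (fun n => f x (u n)) (f x l)).
  { intros x u l Hx0 Hu e He. destruct (Hfc x l Hx0 e He) as [d [Hd Hd']].
    destruct (Hu d Hd) as [N HN]. exists N. intros n Hn. unfold R_dist.
    apply Hd'; auto.
    - replace (x - x) with 0 by ring. rewrite Rabs_R0. lra.
    - apply HN; auto. }
  assert (Hphih : in_M I J eps phih).
  { intros i j Hi Hj. apply (cv_ge _ _ eps (Hcvphi i j Hi Hj)). intros; apply Hphipos; auto. }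
  assert (Hpsih : in_M I J 0 psih).
  { intros i j Hi Hj. apply (cv_ge _ _ 0 (Hcvpsi i j Hi Hj)). intros; apply Hpsipos; auto. }
  exists phih, psih.
  split; [exact Hcv|].
  split; [exact Hphih|].
  split; [exact Hpsih|].
  Ltac cvt Hcvphi Hcvpsi HcvpsiS Hcvf Hx :=
    repeat (first [ apply cv_const | apply CV_minus | apply CV_plus | apply CV_mult | apply cv_opp
                  | (apply Hcvf; [apply Hx; lia|])
                  | (apply Hcvphi; lia) | (apply Hcvpsi; lia) | (apply HcvpsiS; lia) ]).
  split; split.
  - intros i j Hi Hj. eapply lim_eq;
      [intro n; exact (proj1 (Hphi n) i j Hi Hj) | |];
      unfold nbrR, nbrL, Rdiv; cvt Hcvphi Hcvpsi HcvpsiS Hcvf Hx.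
  - intros j Hj. eapply lim_eq;
      [intro n; apply (proj2 (Hphi n)); exact Hj | apply Hcvphi; lia | apply cv_const].
  - intros i j Hi Hj. eapply lim_eq;
      [intro n; exact (proj1 (Hpsi n) i j Hi Hj) | |];
      unfold nbrR, nbrL, Rdiv; cvt Hcvphi Hcvpsi HcvpsiS Hcvf Hx.
  - intros j Hj.
    assert (E : psih 0%nat j * phih 0%nat j = m0 (xg J j)).
    { apply (lim_eq (fun n => psi (S n) 0%nat j * phi n 0%nat j) (fun _ => m0 (xg J j))).
      - intro n. rewrite (proj2 (Hpsi n) j Hj).
        pose proof (Hphipos n 0%nat j ltac:(lia) Hj). field. lra.
      - apply CV_mult; [apply HcvpsiS | apply Hcvphi]; lia.
      - apply cv_const. }
    rewrite <- E. pose proof (Hphih 0%nat j ltac:(lia) Hj). field. lra.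
Qed.
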